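(* In the standing setting, assume stochastic monotonicity (SM). Then for all $t\in\{1,\dots,\overline R\}$, all $k\in\{0,\dots,\sigma^v(t-1)\}$ and all $\delta\in\{0,\dots,N-1\}$, $$\varphi^v(t,k,\delta)\ge\varphi^v(t,k,\delta+1).$$
   Context: Standing setting. Integers $n\ge2$, $m\ge1$; $N:=(n-1)m$. Reals $p_{\mathrm{init}}\ge0$, $\Delta P>0$; the price at round $t\ge0$ is $p_t:=p_{\mathrm{init}}+t\Delta P$. The player's valuation $v:\{0,\dots,m\}\to[0,\infty)$ satisfies $v(0)=0$ and is non-decreasing and concave. $\overline R:=\lceil (v(1)-p_{\mathrm{init}})/\Delta P\rceil$, assumed $\ge1$. For $t\ge0$, $\sigma^v(t):=\min\operatorname{argmax}_{0\le u\le m}(v(u)-up_t)$. The opponent is given by random variables $Z_1\ge Z_2\ge\dots\ge Z_N\ge0$ (a.s.) on a probability space $(\Omega,\mathcal F,\mathbb P)$; its demand at price $p$ is $\delta(p):=\sum_{j=1}^N\mathbf 1\{Z_j>p\}$. For $t\ge1$ fix transition kernels $K_t(\delta'\mid\delta)$ ($\delta,\delta'\in\{0,\dots,N\}$), each $K_t(\cdot\mid\delta)$ a probability on $\{0,\dots,\delta\}$, with $K_t(\delta'\mid\delta)=\mathbb P(\delta(p_t)=\delta'\mid\delta(p_{t-1})=\delta)$ whenever $\mathbb P(\delta(p_{t-1})=\delta)>0$. Value function: for $t\in\{1,\dots,\overline R\}$, $k\in\{0,\dots,m\}$, $\delta\in\{0,\dots,N\}$: $\varphi^v(t,k,\delta):=v(k)-kp_{t-1}$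 if $k+\delta\le m$; $:=\max_{0\le u\le k}\sum_{\delta'=0}^N K_t(\delta'\mid\delta)\varphi^v(t+1,u,\delta')$ if $k+\delta>m$ and $t<\overline R$; $:=0$ if $k+\delta>m$ and $t=\overline R$. Stochastic monotonicity (SM): for every $t\in\{1,\dots,\overline R-1\}$, $s\in\{0,\dots,N\}$ and $\delta\in\{0,\dots,N-1\}$, $\sum_{\delta'\ge s}K_t(\delta'\mid\delta+1)\ge\sum_{\delta'\ge s}K_t(\delta'\mid\delta)$. *)

(* Defs.v *)
From HB Require Import structures.
From mathcomp Require Import all_boot all_order all_algebra.
From mathcomp Require Import all_classical all_reals all_analysis.
Set Implicit Arguments. Unset Strict Implicit. Unset Printing Implicit Defensive.
Import Order.TTheory GRing.Theory Num.Theory.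
Local Open Scope ring_scope.

Section Defs.
Variable R : realType.

Definition price (pinit dP : R) (t : nat) : R := pinit + t%:R * dP.

Definition RbarZ (v : nat -> R) (pinit dP : R) : int :=
  Num.ceil ((v 1%N - pinit) / dP).

(* the same as a natural number (meaningful when RbarZ >= 1) *)
Definition Rbar (v : nat -> R) (pinit dP : R) : nat := `|RbarZ v pinit dP|%N.

Definition util (v : nat -> R) (pinit dP : R) (t u : nat) : R :=
  v u - u%:R * price pinit dP t.

Definition sigmav (m : nat) (v : nat -> R) (pinit dP : R) (t : nat) : nat :=
  find (fun u => [forall w : 'I_m.+1,
                   util v pinit dP t w <= util v pinit dP t u])
       (iota 0 m.+1).

Definition maxupto (k : nat) (F : nat -> R) : R :=
  \big[Num.max/F 0%N]_(u < k.+1) F u.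

(* value function with fuel s = Rbar - t rounds remaining;
   K t d' d stands for K_t(d' | d). *)
Fixpoint phiF (m N : nat) (v : nat -> R) (pinit dP : R)
  (K : nat -> nat -> nat -> R) (s t k d : nat) : R :=
  if (k + d <= m)%N then v k - k%:R * price pinit dP t.-1
  else match s with
       | 0 => 0
       | s'.+1 => maxupto k (fun u =>
            \sum_(d' < N.+1) K t d' d * phiF m N v pinit dP K s' t.+1 u d')
       end.

Definition phiv (m N : nat) (v : nat -> R) (pinit dP : R)
  (K : nat -> nat -> nat -> R) (t k d : nat) : R :=
  phiF m N v pinit dP K (Rbar v pinit dP - t) t k d.

Definition demand (T : Type) (N : nat) (Z : 'I_N -> T -> R) (p : R) (x : T)
  : nat := (\sum_(j < N) ((p < Z j x)%R : nat))%N.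

End Defs.

(* Main.v *)
Require Import Defs.
From HB Require Import structures.
From mathcomp Require Import all_boot all_order all_algebra.
From mathcomp Require Import all_classical all_reals all_analysis.
Import Order.TTheory GRing.Theory Num.Theory.
Local Open Scope ring_scope.
Local Open Scope classical_set_scope.

From mathcomp Require Import ring lra zify.

Set Implicit Arguments. Unset Strict Implicit.
Section ProofSec.
Variables (R : realType) (m N : nat) (pinit dP : R) (v : nat -> R)
  (K : nat -> nat -> nat -> R) (Rb : nat).
Hypothesis dP_gt0 : 0 < dP.
Hypothesis v0 : v 0%N = 0.
Hypothesis vconc : forall u, (0 < u)%N -> (u < m)%N -> v u.+1 - v u <= v u - v u.-1.
Hypothesis Kprop : forall t dl, (1 <= t)%N -> (dl <= N)%N ->
     (forall dl', 0 <= K t dl' dl) /\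
     (forall dl', (dl < dl')%N -> K t dl' dl = 0) /\
     \sum_(dl' < dl.+1) K t dl' dl = 1.
Hypothesis SM : forall t s dl, (1 <= t)%N -> (t < Rb)%N ->
     (s <= N)%N -> (dl < N)%N ->
     \sum_(s <= dl' < N.+1) K t dl' dl
       <= \sum_(s <= dl' < N.+1) K t dl' dl.+1.

Local Notation U := (util v pinit dP).
Local Notation phi := (phiF m N v pinit dP K).
Local Notation sig := (sigmav m v pinit dP).

Lemma maxupto_le k (F : nat -> R) B : (forall u, (u <= k)%N -> F u <= B) -> maxupto k F <= B.
Proof.
move=> H; rewrite /maxupto; apply: (big_ind (fun x => x <= B)).
- exact: H.
- by move=> x y hx hy; rewrite ge_max hx hy.
- by move=> i _; apply: H; rewrite -ltnS; exact: ltn_ord.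
Qed.

Lemma le_big_seq (I : eqType) (r : seq I) (x : R) (G : I -> R) i :
  i \in r -> G i <= \big[Num.max/x]_(j <- r) G j.
Proof.
elim: r => //= a r IH; rewrite inE big_cons => /orP [/eqP -> | h].
  by rewrite le_max lexx.
by rewrite le_max IH // orbT.
Qed.

Lemma le_maxupto k (F : nat -> R) u : (u <= k)%N -> F u <= maxupto k F.
Proof.
move=> hu.
have := (le_big_seq (F 0%N) (fun j : 'I_k.+1 => F j) (mem_index_enum (Ordinal (hu : (u < k.+1)%N)))).
rewrite /maxupto /=. move=> h. exact: h.
Qed.

Lemma Ksum t dl : (1 <= t)%N -> (dl <= N)%N -> \sum_(d' < N.+1) K t d' dl = 1.
Proof.
move=> ht hdl; have [K0 [Kz Ks]] := Kprop ht hdl.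
have -> : \sum_(d' < N.+1) K t d' dl = \sum_(0 <= d' < N.+1) K t d' dl by rewrite big_mkord.
rewrite (big_cat_nat (n:=dl.+1)) //=.
rewrite big_mkord Ks big_nat_cond big1 ?addr0 //.
by move=> i /andP[/andP[hi _] _]; apply: Kz.
Qed.

Lemma Kexp_le t dl h B : (1 <= t)%N -> (dl <= N)%N ->
  (forall d', (d' < N.+1)%N -> h d' <= B) ->
  \sum_(d' < N.+1) K t d' dl * h d' <= B.
Proof.
move=> ht hdl H; have [K0 _] := Kprop ht hdl.
apply: (@le_trans _ _ (\sum_(d' < N.+1) K t d' dl * B)).
  by apply: ler_sum => i _; apply: ler_wpM2l => //; apply: H.
by rewrite -mulr_suml Ksum // mul1r.
Qed.

Lemma Kexp_mono t dl h1 h2 : (1 <= t)%N -> (dl <= N)%N ->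
  (forall d', (d' < N.+1)%N -> h1 d' <= h2 d') ->
  \sum_(d' < N.+1) K t d' dl * h1 d' <= \sum_(d' < N.+1) K t d' dl * h2 d'.
Proof.
move=> ht hdl H; have [K0 _] := Kprop ht hdl.
by apply: ler_sum => i _; apply: ler_wpM2l => //; apply: H.
Qed.

Lemma Ushift t u : U t.+1 u = U t u - u%:R * dP.
Proof. rewrite /util /price -natr1; ring. Qed.

Lemma U_succ t u : U t.+1 u <= U t u.
Proof.
rewrite Ushift lerBlDr lerDl; apply: mulr_ge0 => //; exact: ltW.
Qed.

Lemma U_pred t u : (1 <= t)%N -> U t u <= U t.-1 u.
Proof. by case: t => // t _; apply: U_succ. Qed.

Lemma U0 t : U t 0%N = 0.
Proof. by rewrite /util v0 mul0r subr0. Qed.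

Lemma phiF_base s t k dl : (k + dl <= m)%N -> phi s t k dl = U t.-1 k.
Proof. by case: s => [|s] h /=; rewrite h. Qed.

Lemma phiF_0 t k dl : (m < k + dl)%N -> phi 0 t k dl = 0.
Proof. by move=> h /=; rewrite leqNgt h. Qed.

Lemma phiF_S s t k dl : (m < k + dl)%N -> phi s.+1 t k dl =
  maxupto k (fun u => \sum_(d' < N.+1) K t d' dl * phi s t.+1 u d').
Proof. by move=> h /=; rewrite leqNgt h. Qed.

Lemma Bound s t u dl B : (1 <= t)%N -> (dl <= N)%N ->
  (forall u', (u' <= u)%N -> U t.-1 u' <= B) -> phi s t u dl <= B.
Proof.
elim: s t u dl B => [|s IH] t u dl B ht hdl HB.
  case: (leqP (u + dl) m) => h; first by rewrite phiF_base //; apply: HB.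
  by rewrite phiF_0 // -(U0 t.-1); apply: HB.
case: (leqP (u + dl) m) => h; first by rewrite phiF_base //; apply: HB.
rewrite phiF_S //; apply: maxupto_le => u' hu' /=.
apply: Kexp_le => // d' hd'; apply: IH => // u'' hu''.
apply: le_trans (HB u'' _); last by lia.
by apply: U_pred.
Qed.

Lemma argmax_ex (f : nat -> R) k : exists u, (u <= k)%N /\ forall w, (w <= k)%N -> f w <= f u.
Proof.
elim: k => [|k [u [hu H]]]; first by exists 0%N; split => // w; rewrite leqn0 => /eqP ->.
case: (leP (f k.+1) (f u)) => h.
  exists u; split; first lia.
  move=> w hw; case: (ltngtP w k.+1) => hw'.
  - by apply: H; lia.
  - lia.
  - by rewrite hw'.
exists k.+1; split => // w hw; case: (ltngtP w k.+1) => hw'.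
- by apply: le_trans (ltW h); apply: H; lia.
- lia.
- by rewrite hw'.
Qed.

Lemma sig_spec t : (sig t <= m)%N /\ forall w, (w <= m)%N -> U t w <= U t (sig t).
Proof.
have [u [hu H]] := argmax_ex (U t) m.
set a := (fun u => [forall w : 'I_m.+1, U t w <= U t u]).
have ha : has a (iota 0 m.+1).
  apply/hasP; exists u; first by rewrite mem_iota.
  by apply/forallP => w; apply: H; rewrite -ltnS.
have := nth_find 0%N ha; have := ha; rewrite has_find size_iota => hf.
rewrite nth_iota // add0n => /forallP Hw.
rewrite /sigmav; split; first by rewrite -ltnS.
by move=> w hw; have := Hw (Ordinal (hw : (w < m.+1)%N)).
Qed.

Lemma sig_lt t j : (j < sig t)%N -> U t j < U t (sig t).
Proof.
move=> hj; have hm := (sig_spec t).1.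
have := before_find 0%N hj; rewrite nth_iota; last by lia.
rewrite add0n => /negbT /forallPn [w]; rewrite -ltNge => hw.
apply: lt_le_trans hw _; apply: (sig_spec t).2; rewrite -ltnS; exact: ltn_ord.
Qed.

Lemma Uconc t w : (0 < w)%N -> (w < m)%N -> U t w.+1 - U t w <= U t w - U t w.-1.
Proof.
case: w => // w _ hw; have := vconc (ltn0Sn w) hw => /=.
rewrite /util -[w.+2%:R]natr1 -[w.+1%:R]natr1.
set p := price pinit dP t.-1; set x := w%:R.
rewrite !mulrDl !mul1r; lra.
Qed.

Lemma sig_step t u : (u < sig t)%N -> U t u <= U t u.+1.
Proof.
move=> hu; have hm := (sig_spec t).1.
case: (leP (U t u) (U t u.+1)) => // hlt.
have claim : forall i, (u + i.+1 <= m)%N ->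
   U t (u + i.+1) - U t (u + i) <= U t u.+1 - U t u /\ U t (u + i.+1) <= U t u.+1.
  elim => [|i IH] hi; first by rewrite addn1 addn0; split.
  have [IH1 IH2] := IH (ltac:(lia)).
  have hc := @Uconc t (u + i.+1) (ltac:(lia)) (ltac:(lia)).
  rewrite !addnS /= in hc IH1 IH2 *.
  split; lra.
have := claim (sig t - u).-1 (ltac:(lia)).
have -> : (u + (sig t - u).-1.+1)%N = sig t by lia.
move=> [_ h2]; have := sig_lt hu; lra.
Qed.

Lemma sig_mono t k u : (u <= k)%N -> (k <= sig t)%N -> U t u <= U t k.
Proof.
elim: k => [|k IH] hu hk; first by move: hu; rewrite leqn0 => /eqP ->.
case: (ltngtP u k.+1) => h.
- by apply: le_trans (IH _ _) (sig_step _); lia.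
- lia.
- by rewrite h.
Qed.

Lemma sig_dec t : (sig t.+1 <= sig t)%N.
Proof.
rewrite leqNgt; apply/negP => h.
have [hm H] := sig_spec t; have [hm' H'] := sig_spec t.+1.
have := H' _ hm; rewrite !Ushift.
have := H _ hm'.
have : (sig t)%:R * dP < (sig t.+1)%:R * dP by rewrite ltr_pM2r // ltr_nat.
lra.
Qed.

Lemma phiA s t u dl : (1 <= t)%N -> (dl <= N)%N -> (sig t.-1 <= u)%N -> (u <= m)%N ->
  phi s t u dl <= phi s t (sig t.-1) dl.
Proof.
elim: s t u dl => [|s IH] t u dl ht hdl hj hum.
  case: (leqP (u + dl) m) => h1.
    rewrite !phiF_base //; last by lia.
    by apply: (sig_spec _).2.
  case: (leqP (sig t.-1 + dl) m) => h2.
    rewrite (phiF_base _ _ h2); apply: Bound => // u' hu'.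
    by apply: (sig_spec _).2; lia.
  by rewrite !phiF_0.
case: (leqP (u + dl) m) => h1.
  rewrite !phiF_base //; last by lia.
  by apply: (sig_spec _).2.
case: (leqP (sig t.-1 + dl) m) => h2.
  rewrite (phiF_base _ _ h2); apply: Bound => // u' hu'.
  by apply: (sig_spec _).2; lia.
rewrite !phiF_S //; apply: maxupto_le => u' hu' /=.
case: (leqP u' (sig t.-1)) => hj'; first by apply: (le_maxupto (fun u => _)).
have hs : (sig t <= sig t.-1)%N.
  by have := sig_dec t.-1; rewrite (prednK ht).
apply: le_trans (le_maxupto (fun u => _) hs) => /=.
apply: Kexp_mono => // d' hd'.
have := IH t.+1 u' d' isT (ltac:(lia)) (ltac:(simpl; lia)) (ltac:(lia)).
by [].
Qed.

Lemma abel (D g : nat -> R) :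
  (forall s, (s <= N)%N -> \sum_(s <= i < N.+1) D i <= 0) ->
  \sum_(0 <= i < N.+1) D i = 0 ->
  (forall i, (i < N)%N -> g i.+1 <= g i) ->
  0 <= \sum_(0 <= i < N.+1) D i * g i.
Proof.
move=> HS H0 Hg.
have key : forall j, (j <= N)%N ->
  g (N - j)%N * \sum_(N - j <= i < N.+1) D i <= \sum_(N - j <= i < N.+1) D i * g i.
  elim => [|j IHj] hj; first by rewrite subn0 !big_nat1 mulrC.
  have e : (N - j)%N = (N - j.+1).+1 by lia.
  move: (IHj (ltac:(lia))); rewrite e => IH.
  have hlt : (N - j.+1 < N.+1)%N by lia.
  rewrite !(big_ltn hlt).
  have hS := HS (N - j.+1).+1 (ltac:(lia)).
  have hg := Hg (N - j.+1)%N (ltac:(lia)).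
  set S1 := \sum_(_ <= i < _) D i in IH hS *.
  set T1 := \sum_(_ <= i < _) _ in IH *.
  have hp : (g (N - j.+1)%N - g (N - j.+1).+1) * S1 <= 0.
    by apply: mulr_ge0_le0 => //; rewrite subr_ge0.
  rewrite mulrBl in hp; rewrite mulrDr mulrC; lra.
by have := key N (leqnn N); rewrite subnn H0 mulr0.
Qed.

Lemma SMlemma t dl g : (1 <= t)%N -> (t < Rb)%N -> (dl < N)%N ->
  (forall d', (d' < N)%N -> g d'.+1 <= g d') ->
  \sum_(d' < N.+1) K t d' dl.+1 * g d' <= \sum_(d' < N.+1) K t d' dl * g d'.
Proof.
move=> ht htR hdl Hg.
rewrite -subr_ge0 -sumrB.
under eq_bigr do rewrite -mulrBl.
have -> : \sum_(i < N.+1) (K t i dl - K t i dl.+1) * g i = \sum_(0 <= i < N.+1) (K t i dl - K t i dl.+1) * g i by rewrite big_mkord.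
apply: abel => //.
  move=> s hs; rewrite sumrB subr_le0; exact: SM.
by rewrite sumrB !big_mkord !Ksum // ?subrr //; lia.
Qed.

Lemma phiM s t k dl : (s + t = Rb)%N -> (1 <= t)%N -> (k <= sig t.-1)%N -> (dl < N)%N ->
  phi s t k dl.+1 <= phi s t k dl.
Proof.
elim: s t k dl => [|s IH] t k dl hst ht hk hdl.
  case: (leqP (k + dl.+1) m) => h1; first by rewrite !phiF_base //; lia.
  case: (leqP (k + dl) m) => h2.
    rewrite (phiF_base _ _ h2); apply: Bound => // u' hu'.
    exact: sig_mono.
  by rewrite !phiF_0 //; lia.
case: (leqP (k + dl.+1) m) => h1; first by rewrite !phiF_base //; lia.
case: (leqP (k + dl) m) => h2.
  rewrite (phiF_base _ _ h2); apply: Bound => // u' hu'.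
  exact: sig_mono.
have htR : (t < Rb)%N by lia.
have hkm : (k <= m)%N by apply: leq_trans hk (sig_spec _).1.
rewrite phiF_S; last by lia.
rewrite phiF_S; last by lia.
apply: maxupto_le => u hu /=.
case: (leqP u (sig t)) => hu2.
  apply: le_trans (le_maxupto (fun u => _) hu) => /=.
  apply: SMlemma => // d' hd'.
  by apply: IH => //; lia.
have hsk : (sig t <= k)%N by lia.
apply: le_trans (le_maxupto (fun u => _) hsk) => /=.
apply: (@le_trans _ _ (\sum_(d' < N.+1) K t d' dl.+1 * phi s t.+1 (sig t) d')).
  apply: Kexp_mono => // d' hd'.
  by apply: (phiA s (t:=t.+1)) => //=; lia.
apply: SMlemma => // d' hd'.
by apply: IH => //; lia.
Qed.

End ProofSec.

Theorem mainTheorem11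
  (R : realType) (n m : nat) (pinit dP : R) (v : nat -> R)
  (d : measure_display) (Omega : measurableType d)
  (P : probability Omega R)
  (Z : 'I_((n - 1) * m) -> {RV P >-> R})
  (K : nat -> nat -> nat -> R) :
  (2 <= n)%N -> (1 <= m)%N ->
  0 <= pinit -> 0 < dP ->
  (* valuation: v(0)=0, non-decreasing and concave on {0,...,m} *)
  v 0%N = 0 ->
  (forall u, (u < m)%N -> v u <= v u.+1) ->
  (forall u, (0 < u)%N -> (u < m)%N -> v u.+1 - v u <= v u - v u.-1) ->
  (* Rbar >= 1 *)
  (1 <= RbarZ v pinit dP)%R ->
  (* opponent: Z_1 >= Z_2 >= ... >= Z_N >= 0 almost surely *)
  {ae P, forall x, forall i j : 'I_((n - 1) * m),
      (i <= j)%N -> Z j x <= Z i x /\ 0 <= Z j x} ->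
  (* transition kernels: K_t(. | delta) is a probability on {0,...,delta} *)
  (forall t dl, (1 <= t)%N -> (dl <= (n - 1) * m)%N ->
     (forall dl', 0 <= K t dl' dl) /\
     (forall dl', (dl < dl')%N -> K t dl' dl = 0) /\
     \sum_(dl' < dl.+1) K t dl' dl = 1) ->
  (* consistency with the opponent's conditional law *)
  (forall t dl dl', (1 <= t)%N -> (dl <= (n - 1) * m)%N ->
     (dl' <= (n - 1) * m)%N ->
     let A := [set x | demand (fun j => Z j) (price pinit dP t.-1) x = dl] in
     let B := [set x | demand (fun j => Z j) (price pinit dP t) x = dl'] in
     (0 < P A)%E ->
     K t dl' dl = fine (P (A `&` B)) / fine (P A)) ->
  (* stochastic monotonicity (SM) *)
  (forall t s dl, (1 <= t)%N -> (t < Rbar v pinit dP)%N ->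
     (s <= (n - 1) * m)%N -> (dl < (n - 1) * m)%N ->
     \sum_(s <= dl' < ((n - 1) * m).+1) K t dl' dl
       <= \sum_(s <= dl' < ((n - 1) * m).+1) K t dl' dl.+1) ->
  forall t k dl, (1 <= t)%N -> (t <= Rbar v pinit dP)%N ->
    (k <= sigmav m v pinit dP t.-1)%N -> (dl < (n - 1) * m)%N ->
    phiv m ((n - 1) * m) v pinit dP K t k dl.+1
      <= phiv m ((n - 1) * m) v pinit dP K t k dl.
Proof.
Proof.
move=> hn hm hp hdP v0 vinc vconc hR _ Kprop _ SM t k dl ht htR hk hdl.
rewrite /phiv.
apply: (phiM (Rb := Rbar v pinit dP)) => //.
by rewrite subnK.
Qed.
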